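(* For $1\le i<d$, the normalizer $\{g\in O_d(\mathbb C): gL^{(i)}=L^{(i)}\}$ of $L^{(i)}$ is equal to $N_d^{d-i}(\mathbb C)$.
   Context: Fix $d\ge2$. $V=\mathbb C^d\oplus\mathfrak{so}(d,\mathbb C)$, elements $(v,M)$ with $v=(c_1,\dots,c_d)^\top$, $M$ complex skew-symmetric, $M_{ij}=c_{ij}=-M_{ji}$ for $i<j$; $O_d(\mathbb C)=\{A:AA^\top=I\}$ acts by $A\cdot(v,M)=(Av,AMA^\top)$. $L^{(1)}=\{c_1=\dots=c_{d-1}=0\}$ and for $2\le i\le d-1$, $L^{(i)}=\{(v,M)\in L^{(i-1)}:c_{k(d-i+2)}=0,\ 1\le k\le d-i\}$. For $1\le j<d$, $N_d^{j}(\mathbb C)$ is the subgroup of $O_d(\mathbb C)$ consisting of block-diagonal matrices $\mathrm{diag}(B,\pm1,\dots,\pm1)$ with $B\in O_j(\mathbb C)$ (upper-left $j\times j$ block) and the remaining $d-j$ diagonal entries each in $\{-1,1\}$ (all other entries zero). *)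

(* Defs.v *)
From HB Require Import structures.
From mathcomp Require Import all_boot all_order all_algebra.
From mathcomp Require Import complex.
From mathcomp Require Import reals.
Set Implicit Arguments. Unset Strict Implicit. Unset Printing Implicit Defensive.
Import Order.TTheory GRing.Theory Num.Theory.
Local Open Scope ring_scope.

Definition is_orth (F : fieldType) (n : nat) (A : 'M[F]_n) : Prop :=
  A *m A^T = 1%:M.

(* Elements of V = C^d (+) so(d): pairs (v, M), v a column vector, M skew. *)
Definition inV (F : fieldType) (d : nat) (x : 'cV[F]_d * 'M[F]_d) : Prop :=
  x.2^T = - x.2.

Definition act (F : fieldType) (d : nat) (A : 'M[F]_d) (x : 'cV[F]_d * 'M[F]_d)
  : 'cV[F]_d * 'M[F]_d := (A *m x.1, A *m x.2 *m A^T).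

(* Indices are 1-based in the paper: c_j = v (j-1), c_{kl} = M (k-1) (l-1). *)
Definition L1cond (F : fieldType) (d : nat) (x : 'cV[F]_d * 'M[F]_d) : Prop :=
  forall j : 'I_d, (j.+1 <= d - 1)%N -> x.1 j 0 = 0.

(* the extra condition defining L^(m) inside L^(m-1), m >= 2:
   c_{k (d-m+2)} = 0 for 1 <= k <= d-m *)
Definition Lstep (F : fieldType) (d m : nat) (x : 'cV[F]_d * 'M[F]_d) : Prop :=
  forall k l : 'I_d, (1 <= k.+1 <= d - m)%N -> l.+1 = (d - m + 2)%N ->
    x.2 k l = 0.

(* Lrec d n = L^(n+1) *)
Fixpoint Lrec (F : fieldType) (d n : nat) (x : 'cV[F]_d * 'M[F]_d) : Prop :=
  match n with
  | O => inV x /\ L1cond x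
  | n'.+1 => @Lrec F d n' x /\ @Lstep F d n.+1 x
  end.

Definition Lsub (F : fieldType) (d i : nat) : 'cV[F]_d * 'M[F]_d -> Prop :=
  @Lrec F d i.-1.

Definition stabilizes (F : fieldType) (d : nat) (g : 'M[F]_d)
  (S : 'cV[F]_d * 'M[F]_d -> Prop) : Prop :=
  forall y, (exists x, S x /\ act g x = y) <-> S y.

(* N_{j+k}^{j}: block-diagonal diag(B, +-1, ..., +-1), B in O_j. *)
Definition inN (F : fieldType) (j k : nat) (g : 'M[F]_(j + k)) : Prop :=
  exists B : 'M[F]_j, is_orth B /\
  exists s : 'rV[F]_k, (forall t, s 0 t = 1 \/ s 0 t = -1) /\
    g = block_mx B 0 0 (diag_mx s).

Arguments Lsub {F} d i _.

(* Main.v *)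
Require Import Defs.
From HB Require Import structures.
From mathcomp Require Import all_boot all_order all_algebra.
From mathcomp Require Import complex.
From mathcomp Require Import reals.
From mathcomp Require Import zify.
Set Implicit Arguments. Unset Strict Implicit. Unset Printing Implicit Defensive.
Import Order.TTheory GRing.Theory Num.Theory.
Local Open Scope ring_scope.

Lemma Lrec_char (F : fieldType) d n (x : 'cV[F]_d * 'M[F]_d) : (n.+2 <= d)%N ->
  @Lrec F d n x <-> [/\ inV x, L1cond x & forall k l : 'I_d, (d - n <= l)%N -> (k.+1 < l)%N -> x.2 k l = 0].
Proof.
elim: n => [|n IH] hn /=.
  split => [[h1 h2]|[h1 h2 _]]; split => //.
  move=> k l hl; have := ltn_ord l; lia.
rewrite IH; last lia.
split.
- move=> [[h1 h2 h3] h4]; split=>// k l hl hk.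
  case: (leqP (d-n) l) => hl2; first exact: h3.
  apply: h4; first (apply/andP; split; lia). lia.
- move=> [h1 h2 h3]; split; [split=>//|].
    move=> k l hl hk; apply: h3 => //; lia.
  move=> k l /andP[_ hk] hl; apply: h3; lia.
Qed.

Definition Lc (F : fieldType) d j (x : 'cV[F]_d * 'M[F]_d) : Prop :=
  [/\ inV x, forall k : 'I_d, (k.+1 < d)%N -> x.1 k 0 = 0 &
     forall k l : 'I_d, (j < l)%N -> (k.+1 < l)%N -> x.2 k l = 0].

Lemma Lsub_char (F : fieldType) j i (x : 'cV[F]_(j + i) * 'M[F]_(j + i)) :
  (1 <= i)%N -> (1 <= j)%N -> Lsub (j + i) i x <-> Lc j x.
Proof.
move=> hi hj; rewrite /Lsub Lrec_char; last lia.
split => [[h1 h2 h3]|[h1 h2 h3]]; split => //.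
- move=> k hk; apply: h2; lia.
- move=> k l hl hk; apply: h3 => //; lia.
- move=> k hk; apply: h2; lia.
- move=> k l hl hk; apply: h3 => //; lia.
Qed.

Definition splitm (F : fieldType) d j (g : 'M[F]_d) :=
  forall a b : 'I_d, a != b -> (j <= a)%N || (j <= b)%N -> g a b = 0.

Lemma triple (F : fieldType) m n p (A : 'M[F]_(m, n)) (B : 'M[F]_(n, p)) (q r : 'I_n) a b :
  (A *m delta_mx q r *m B) a b = A a q * B r b.
Proof.
have -> : delta_mx q r = delta_mx q ord0 *m delta_mx (ord0 : 'I_1) r :> 'M[F]_(n,n) by rewrite (mul_delta_mx (ord0 : 'I_1)).
rewrite mulmxA.
have -> : A *m delta_mx q ord0 = col q A by rewrite colE.
rewrite -mulmxA.
have -> : delta_mx ord0 r *m B = row r B by rewrite rowE.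
by rewrite mxE big_ord1 !mxE.
Qed.

Lemma act_split (F : fieldType) d j (g : 'M[F]_d) x :
  (j < d)%N -> splitm j g -> Lc j x -> Lc j (act g x).
Proof.
move=> hjd hg [h1 h2 h3]; split.
- by rewrite /inV /act /= !trmx_mul trmxK h1 mulNmx mulmxN mulmxA.
- move=> k hk /=; rewrite mxE big1 // => b _.
  case: (ltnP b.+1 d) => hb; first by rewrite h2 // mulr0.
  rewrite hg ?mul0r //; last (apply/orP; right; lia).
  rewrite -val_eqE /=; lia.
- move=> k l hl hk /=; rewrite mxE (bigD1 l) //= big1 => [|a hal].
    rewrite addr0 mxE big1 ?mul0r // => b _.
    case: (ltnP b.+1 l) => hb; first by rewrite h3 // mulr0.
    rewrite hg ?mul0r //; last (apply/orP; right; lia).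
    rewrite -val_eqE /=; lia.
  rewrite [g^T _ _]mxE hg ?mulr0 //; last (apply/orP; left; lia).
  by rewrite eq_sym.
Qed.

Lemma tr_split (F : fieldType) d j (g : 'M[F]_d) : splitm j g -> splitm j g^T.
Proof. by move=> hg a b hab h; rewrite mxE hg // 1?eq_sym // orbC. Qed.

Lemma stab_ext (F : fieldType) d (g : 'M[F]_d) S T :
  (forall x, S x <-> T x) -> stabilizes g S <-> stabilizes g T.
Proof.
move=> e; split => h y.
- rewrite -e -h; split => [[x [Sx ?]]|[x [Sx ?]]]; exists x; split => //; by apply/e.
- rewrite e -h; split => [[x [Sx ?]]|[x [Sx ?]]]; exists x; split => //; by apply/e.
Qed.

Lemma stab_split (F : fieldType) d j (g : 'M[F]_d) :
  (j < d)%N -> g *m g^T = 1%:M -> splitm j g -> stabilizes g (Lc j).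
Proof.
move=> hjd hgg hg y; split.
  by move=> [x [Lx <-]]; apply: act_split.
move=> Ly; exists (act g^T y); split; first by apply: act_split => //; apply: tr_split.
case: y Ly => v M Ly; rewrite /act /= trmxK !mulmxA hgg !mul1mx -mulmxA hgg mulmx1 //.
Qed.

Lemma diag_sq (F : fieldType) d (g : 'M[F]_d) c :
  g^T *m g = 1%:M -> (forall a, a != c -> g a c = 0) ->
  forall b, (g^T *m g) b c = g c b * g c c.
Proof.
move=> h hc b; rewrite mxE (bigD1 c) //= big1 ?addr0 ?mxE // => a ha.
by rewrite hc ?mulr0.
Qed.

Lemma diag_nz (F : fieldType) d (g : 'M[F]_d) c :
  g^T *m g = 1%:M -> (forall a, a != c -> g a c = 0) -> g c c * g c c = 1.
Proof. by move=> h hc; rewrite -diag_sq // h mxE eqxx. Qed.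

Lemma row_of_col (F : fieldType) d (g : 'M[F]_d) c :
  g^T *m g = 1%:M -> (forall a, a != c -> g a c = 0) ->
  forall b, b != c -> g c b = 0.
Proof.
move=> h hc b hb.
have hcc : g c c != 0.
  apply/eqP => z; have := diag_nz h hc; rewrite z mulr0 => /eqP.
  by rewrite eq_sym oner_eq0.
have := diag_sq h hc b; rewrite h mxE (negbTE hb) mulr0n => /esym/eqP.
by rewrite mulf_eq0 (negbTE hcc) orbF => /eqP.
Qed.

Lemma cols (F : fieldType) d j (g : 'M[F]_d) : (j < d)%N -> g *m g^T = 1%:M ->
  (forall x, Lc j x -> Lc j (act g x)) ->
  forall c : 'I_d, (j <= c)%N -> forall a, a != c -> g a c = 0.
Proof.
move=> hjd hgg hL.
have hgt := mulmx1C hgg.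
suff H : forall n (c : 'I_d), (j <= c)%N -> (d - 1 - n <= c)%N ->
    forall a, a != c -> g a c = 0.
  by move=> c hc; apply: (H d) => //; lia.
elim=> [|n IH] c hjc hc.
  move=> a hac.
  pose x : 'cV[F]_d * 'M[F]_d := (delta_mx c ord0, 0).
  have Lx : Lc j x.
    split.
    - by rewrite /inV /= trmx0 oppr0.
    - move=> k hk /=; rewrite mxE.
      have -> : (k == c) = false.
        by apply/eqP => e; move: hk; rewrite e; lia.
      by [].
    - by move=> k l _ _ /=; rewrite mxE.
  have [_ hv _] := hL x Lx.
  have ha : (a.+1 < d)%N.
    have := ltn_ord a; have := ltn_ord c; move: hac; rewrite -val_eqE /=; lia.
  have := hv a ha; rewrite /act /=.
  have -> : g *m delta_mx c ord0 = col c g by rewrite colE.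
  by rewrite mxE.
case: (leqP (d - 1 - n) c) => h; first by apply: IH.
have hc1 : (c.+1 < d)%N by lia.
pose c1 : 'I_d := Ordinal hc1.
have IH' : forall c' : 'I_d, (c < c')%N -> forall a, a != c' -> g a c' = 0.
  move=> c' hc'; apply: IH; lia.
have Row : forall c' : 'I_d, (c < c')%N -> forall b, b != c' -> g c' b = 0.
  move=> c' hc'; apply: row_of_col => //; exact: IH'.
move=> a hac.
case: (ltngtP a c) => [hlt|hgt'|heq].
- pose x : 'cV[F]_d * 'M[F]_d := (0, delta_mx c c1 - delta_mx c1 c).
  have Lx : Lc j x.
    split.
    - by rewrite /inV /= linearB /= !trmx_delta opprB.
    - by move=> k hk /=; rewrite mxE.
    - move=> k l hl hk /=; rewrite !mxE.
      have -> : (k == c) && (l == c1) = false.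
        by apply/andP => -[/eqP e1 /eqP e2]; move: hk; rewrite e1 e2 /=; lia.
      have -> : (k == c1) && (l == c) = false.
        by apply/andP => -[/eqP e1 /eqP e2]; move: hk; rewrite e1 e2 /=; lia.
      by rewrite subr0.
  have [_ _ hM] := hL x Lx.
  have h1 : (j < c1)%N by rewrite /=; lia.
  have h2 : (a.+1 < c1)%N by rewrite /=; lia.
  have Q1 := IH' c1 (ltnSn c).
  have := hM a c1 h1 h2; rewrite /act /= mulmxBr mulmxBl mxE [X in _ + X = _]mxE !triple !mxE.
  rewrite (Q1 a); last by rewrite -val_eqE /=; lia.
  rewrite mul0r subr0.
  move/eqP; rewrite mulf_eq0 => /orP [/eqP //|hz].
  have := diag_nz hgt Q1; rewrite (eqP hz) mulr0 => /eqP.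
  by rewrite eq_sym oner_eq0.
- apply: (Row a) => //; by rewrite eq_sym.
- by move: hac; rewrite -val_eqE /= heq eqxx.
Qed.

Lemma block_split (F : fieldType) j i (B : 'M[F]_j) (s : 'rV[F]_i) :
  splitm j (block_mx B 0 0 (diag_mx s)).
Proof.
move=> a b hab h.
case: (splitP a) => [a' ea|a' ea];
  [have -> : a = lshift i a' by apply/val_inj|have -> : a = rshift j a' by apply/val_inj];
case: (splitP b) => [b' eb|b' eb];
  (try have -> : b = lshift i b' by apply/val_inj);
  (try have -> : b = rshift j b' by apply/val_inj).
- move: h; rewrite ea eb; have := ltn_ord a'; have := ltn_ord b'; lia.
- by rewrite block_mxEur mxE.
- by rewrite block_mxEdl mxE.
- rewrite block_mxEdr mxE.
  have -> : (a' == b') = false.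
    by apply/eqP => e; move: hab; rewrite -val_eqE /= ea eb e eqxx.
  by rewrite mulr0n.
Qed.

Theorem proposition3p5 (R : realType) (j i : nat) (hi : (1 <= i)%N) (hj : (1 <= j)%N)
  (g : 'M[complex R]_(j + i)) :
  (is_orth g /\ stabilizes g (Lsub (j + i) i)) <-> inN g.
Proof.
have hjd : (j < j + i)%N by lia.
have Lch := fun x => @Lsub_char (complex R) j i x hi hj.
split.
- move=> [hg hst].
  have hst' := (stab_ext g Lch).1 hst.
  have hL : forall x, Lc j x -> Lc j (act g x).
    by move=> x Lx; apply/(hst' (act g x)); exists x.
  have hgt := mulmx1C hg.
  have Q := cols hjd hg hL.
  have hs : splitm j g.
    move=> a b hab /orP [h|h].
      by apply: (row_of_col hgt (Q a h)); rewrite eq_sym.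
    by apply: Q.
  pose s : 'rV[complex R]_i := \row_t g (rshift j t) (rshift j t).
  have Eg : g = block_mx (ulsubmx g) 0 0 (diag_mx s).
    rewrite -{1}(submxK g); congr block_mx; apply/matrixP => a b; rewrite !mxE.
    + apply: hs; last (apply/orP; right; rewrite /=; lia).
      rewrite -val_eqE /=; have := ltn_ord a; lia.
    + apply: hs; last (apply/orP; left; rewrite /=; lia).
      rewrite -val_eqE /=; have := ltn_ord b; lia.
    + case: eqVneq => [->|hab]; first by rewrite mulr1n.
      rewrite mulr0n; apply: hs; last (apply/orP; left; rewrite /=; lia).
      by rewrite -val_eqE /= eqn_add2l val_eqE.
  exists (ulsubmx g); split.
    have := hg; rewrite /is_orth {1 2}Eg tr_block_mx mulmx_block !trmx0 !mul0mx !mulmx0 !addr0 !add0r.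
    by rewrite (scalar_mx_block j i) => /eq_block_mx [-> _ _ _].
  exists s; split => [t|//].
  have hr : (j <= rshift j t)%N by rewrite /=; lia.
  have := diag_nz hgt (Q _ hr); rewrite mxE -expr2 => /eqP.
  by rewrite sqrf_eq1 => /orP [/eqP ->|/eqP ->]; [left|right].
- move=> [B [hB [s [hs Eg]]]].
  have hgg : g *m g^T = 1%:M.
    rewrite Eg tr_block_mx mulmx_block !trmx0 !mul0mx !mulmx0 !addr0 !add0r.
    rewrite hB tr_diag_mx mulmx_diag (scalar_mx_block j i); congr block_mx.
    apply/matrixP => a b; rewrite !mxE; case: (hs a) => ->; by rewrite ?mulrNN mulr1.
  split => //.
  apply/(stab_ext g Lch); apply: stab_split => //.
  by rewrite Eg; apply: block_split.
Qed.
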